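(* For every binary decision tree $T$ on $\mathcal X$ in which every node $n$ satisfies $\mathcal I(n)\neq\emptyset$, the cost of the corresponding solution graph $\mathcal S(T)$ satisfies $\mathrm{cost}(\mathcal S(T))=-\log P(T,\mathcal Y\mid\mathcal X)$. Consequently, a minimum-cost solution graph of $\mathcal G_{\mathcal X,\mathcal Y}$ corresponds to a maximum a posteriori tree, i.e. a tree maximizing $P(T\mid\mathcal Y,\mathcal X)\propto P(\mathcal Y\mid\mathcal X,T)P(T\mid\mathcal X)$.
   Context: Let $x_1,\dots,x_N\in\{0,1\}^F$ be a binary dataset $\mathcal X$ with labels $\mathcal Y=(y_1,\dots,y_N)\in\{0,1\}^N$, and $[N]=\{1,\dots,N\}$. For $\mathcal I\subseteq[N]$, $f\in[F]$, $k\in\{0,1\}$ let $\mathcal I|_{f=k}=\{i\in\mathcal I:(x_i)_f=k\}$, $c^k(\mathcal I)=|\{i\in\mathcal I:y_i=k\}|$, and $\mathcal V(\mathcal I)=\{f\in[F]:\mathcal I|_{f=0}\neq\emptyset\text{ and }\mathcal I|_{f=1}\neq\emptyset\}$. Fix $\rho^1,\rho^0>0$, $\alpha\in(0,1)$, $\beta\ge 0$. Let $B$ be the Beta function, $\ell_{\rm leaf}(c^1,c^0)=B(c^1+\rho^1,c^0+\rho^0)/B(\rho^1,\rho^0)$, $p_{\rm split}(d)=\alpha(1+d)^{-\beta}$, $p_{\rm leaf}(d,\mathcal I)=1$ if $\mathcal V(\mathcal I)=\emptyset$ and $1-p_{\rm split}(d)$ otherwise, $p_{\rm inner}(d,\mathcal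 I)=0$ if $\mathcal V(\mathcal I)=\emptyset$ and $p_{\rm split}(d)/|\mathcal V(\mathcal I)|$ otherwise; $-\log 0=+\infty$. The AND/OR graph $\mathcal G_{\mathcal X,\mathcal Y}$: for every nonempty $\mathcal I\subseteq[N]$ and $d\in\{0,\dots,F\}$ there is an OR node $o_{\mathcal I,d}$ and a terminal node $t_{\mathcal I,d}$, with an edge $o_{\mathcal I,d}\to t_{\mathcal I,d}$ of cost $-\log p_{\rm leaf}(d,\mathcal I)-\log\ell_{\rm leaf}(c^1(\mathcal I),c^0(\mathcal I))$. For every such OR node with $d<F$ and every $f\in\mathcal V(\mathcal I)$ there is an AND node $a_{\mathcal I,d,f}$ with an edge $o_{\mathcal I,d}\to a_{\mathcal I,d,f}$ of cost $-\log p_{\rm inner}(d,\mathcal I)$ and edges of cost $0$ from $a_{\mathcal I,d,f}$ to $o_{\mathcal I|_{f=0},d+1}$ and to $o_{\mathcal I|_{f=1},d+1}$. The root is $r=o_{[N],0}$; only nodes reachable from $r$ are kept. A solution graph is a set $\mathcal S$ of nodes with $r\in\mathcal S$, every node of $\mathcal S$ reachable from $r$ inside $\mathcal S$, every AND node of $\mathcal S$ having both children in $\mathcal S$, every OR node of $\mathcal S$ having exactly one child in $\mathcal S$; its cost $\mathrm{cost}(\mathcal S)$ is the sum of the costs of the edges $u\to v$ with $u,v\in\mathcal S$. A binary decision tree $T$ on $\mathcal X$ is a finite rooted tree in which each internal node $m$ is labeled by a feature $f(m)\in[F]$ and has a $0$-child and a $1$-child; $d(n)$ is the depth of node $n$ (root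 depth $0$), $\mathcal I(\mathrm{root})=[N]$ and the $k$-child of $m$ has $\mathcal I(m)|_{f(m)=k}$. The corresponding solution graph is $\mathcal S(T)=\{o_{\mathcal I(n),d(n)}:n\in T\}\cup\{t_{\mathcal I(n),d(n)}:n\text{ leaf}\}\cup\{a_{\mathcal I(m),d(m),f(m)}:m\text{ internal}\}$ (a bijection onto solution graphs). Prior and likelihood: $P(T\mid\mathcal X)=\prod_{l\text{ leaf}}p_{\rm leaf}(d(l),\mathcal I(l))\prod_{m\text{ internal}}p_{\rm inner}(d(m),\mathcal I(m))$, $P(\mathcal Y\mid\mathcal X,T)=\prod_{l\text{ leaf}}\ell_{\rm leaf}(c^1(\mathcal I(l)),c^0(\mathcal I(l)))$ (the marginal likelihood when each leaf has a Bernoulli label distribution with a $\mathrm{Beta}(\rho^1,\rho^0)$ prior on its parameter), and $P(T,\mathcal Y\mid\mathcal X)=P(\mathcal Y\mid\mathcal X,T)P(T\mid\mathcal X)$. *)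

(* Defs.v *)
From HB Require Import structures.
From mathcomp Require Import all_boot all_order all_algebra.
From mathcomp Require Import all_classical all_reals all_analysis.
Set Implicit Arguments. Unset Strict Implicit. Unset Printing Implicit Defensive.
Import Order.TTheory GRing.Theory Num.Theory.
Local Open Scope ring_scope.

Definition Beta (R : realType) (a b : R) : R :=
  fine (\int[@lebesgue_measure R]_(x in `]0%R, 1%R[%classic)
          ((powR x (a - 1)) * (powR (1 - x) (b - 1)))%:E)%E.

Definition nlog (R : realType) (x : R) : \bar R :=
  if x == 0 then +oo%E else (- ln x)%:E.

Inductive node (N F : nat) :=
| OrN of {set 'I_N} & 'I_F.+1
| TermN of {set 'I_N} & 'I_F.+1
| AndN of {set 'I_N} & 'I_F.+1 & 'I_F.

Section NodeFin.
Variables N F : nat.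
Definition node_enc (u : node N F) :
  ({set 'I_N} * 'I_F.+1) + ({set 'I_N} * 'I_F.+1) + ({set 'I_N} * 'I_F.+1 * 'I_F) :=
  match u with
  | OrN A d => inl (inl (A, d))
  | TermN A d => inl (inr (A, d))
  | AndN A d f => inr (A, d, f)
  end.
Definition node_dec (x : ({set 'I_N} * 'I_F.+1) + ({set 'I_N} * 'I_F.+1)
                          + ({set 'I_N} * 'I_F.+1 * 'I_F)) : node N F :=
  match x with
  | inl (inl (A, d)) => OrN A d
  | inl (inr (A, d)) => TermN A d
  | inr (A, d, f) => AndN A d f
  end.
Lemma node_encK : cancel node_enc node_dec. Proof. by case. Qed.
HB.instance Definition _ := Finite.copy (node N F) (can_type node_encK).
End NodeFin.

(* binary decision trees: Node f t0 t1 has 0-child t0 and 1-child t1 *)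
Inductive dtree (F : nat) := Leaf | Node of 'I_F & dtree F & dtree F.
Arguments Leaf {F}.

Section Model.
Variables (R : realType) (N F : nat) (X : 'I_N -> 'I_F -> bool) (Y : 'I_N -> bool).
Variables (rho1 rho0 alpha beta : R).

Definition restr (A : {set 'I_N}) (f : 'I_F) (k : bool) : {set 'I_N} :=
  [set i in A | X i f == k].
Definition cnt (k : bool) (A : {set 'I_N}) : nat := #|[set i in A | Y i == k]|.
Definition Vset (A : {set 'I_N}) : {set 'I_F} :=
  [set f : 'I_F | (restr A f false != finset.set0) && (restr A f true != finset.set0)].

Definition lleaf (c1 c0 : nat) : R :=
  Beta (c1%:R + rho1) (c0%:R + rho0) / Beta rho1 rho0.
Definition psplit (d : nat) : R := alpha * powR (1 + d%:R) (- beta).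
Definition pleaf (d : nat) (A : {set 'I_N}) : R :=
  if Vset A == finset.set0 then 1 else 1 - psplit d.
Definition pinner (d : nat) (A : {set 'I_N}) : R :=
  if Vset A == finset.set0 then 0 else psplit d / #|Vset A|%:R.

Definition is_edge (u v : node N F) : bool :=
  match u, v with
  | OrN A d, TermN A' d' => [&& A != finset.set0, A' == A & d' == d]
  | OrN A d, AndN A' d' f => [&& A != finset.set0, A' == A, d' == d, (d < F)%N & f \in Vset A]
  | AndN A d f, OrN A' d' =>
      [&& A != finset.set0, (d < F)%N, f \in Vset A,
          (A' == restr A f false) || (A' == restr A f true) & (d' == d.+1 :> nat)]
  | _, _ => false
  end.

Definition ecost (u v : node N F) : \bar R :=
  match u, v with
  | OrN A d, TermN _ _ => (nlog (pleaf d A) + nlog (lleaf (cnt true A) (cnt false A)))%E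
  | OrN A d, AndN _ _ _ => nlog (pinner d A)
  | _, _ => 0%E
  end.

Definition root : node N F := OrN [set: 'I_N] ord0.

Definition is_or (u : node N F) : bool := if u is OrN _ _ then true else false.
Definition is_and (u : node N F) : bool := if u is AndN _ _ _ then true else false.

Definition G_node (u : node N F) : bool := connect is_edge root u.

Definition solution_graph (S : {set node N F}) : Prop :=
  [/\ S \subset [set u | G_node u],
      root \in S,
      forall u, u \in S ->
        connect (fun a b => [&& a \in S, b \in S & is_edge a b]) root u,
      forall u, u \in S -> is_and u -> forall v, is_edge u v -> v \in S &
      forall u, u \in S -> is_or u -> #|[set v in S | is_edge u v]| = 1%N].

Definition cost (S : {set node N F}) : \bar R :=
  (\sum_(u in S) \sum_(v in S | is_edge u v) ecost u v)%E.

Fixpoint nonempty_nodes (T : dtree F) (A : {set 'I_N}) : bool :=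
  (A != finset.set0) &&
  match T with
  | Leaf => true
  | Node f t0 t1 => nonempty_nodes t0 (restr A f false) && nonempty_nodes t1 (restr A f true)
  end.

(* S(T) for the subtree T whose root has index set A and depth d.
   (Under nonempty_nodes, all depths are <= F, so inord is exact.) *)
Fixpoint solT (T : dtree F) (A : {set 'I_N}) (d : nat) : {set node N F} :=
  match T with
  | Leaf => [set OrN A (inord d); TermN A (inord d)]
  | Node f t0 t1 =>
      OrN A (inord d) |: (AndN A (inord d) f
        |: (solT t0 (restr A f false) d.+1 :|: solT t1 (restr A f true) d.+1))
  end.

Fixpoint prior (T : dtree F) (A : {set 'I_N}) (d : nat) : R :=
  match T with
  | Leaf => pleaf d A
  | Node f t0 t1 =>
      pinner d A * prior t0 (restr A f false) d.+1 * prior t1 (restr A f true) d.+1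
  end.

Fixpoint lik (T : dtree F) (A : {set 'I_N}) : R :=
  match T with
  | Leaf => lleaf (cnt true A) (cnt false A)
  | Node f t0 t1 => lik t0 (restr A f false) * lik t1 (restr A f true)
  end.

Definition joint (T : dtree F) : R := lik T [set: 'I_N] * prior T [set: 'I_N] 0.

End Model.

(* Main.v *)
Require Import Defs.
From HB Require Import structures.
From mathcomp Require Import all_boot all_order all_algebra.
From mathcomp Require Import all_classical all_reals all_analysis.
From mathcomp Require Import zify.
From mathcomp Require Import fintype finset.
Import Order.TTheory GRing.Theory Num.Theory.
Local Open Scope ring_scope.
Section Proofs.
Variables (R : realType) (N F : nat) (X : 'I_N -> 'I_F -> bool) (Y : 'I_N -> bool).
Variables (rho1 rho0 alpha beta : R).

Local Notation E := (is_edge X).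
Local Notation node := (node N F).

Definition idx (u : node) : {set 'I_N} :=
  match u with OrN A _ | TermN A _ | AndN A _ _ => A end.
Definition dep (u : node) : nat :=
  match u with OrN _ d | TermN _ d | AndN _ d _ => d end.

Lemma restr_sub (A : {set 'I_N}) f k : restr X A f k \subset A.
Proof. by apply/fintype.subsetP=> i; rewrite inE => /andP[]. Qed.

Lemma edge_props {u v} : E u v ->
  [/\ idx v \subset idx u, is_or v -> dep v = (dep u).+1 & ~~ is_or v -> dep v = dep u].
Proof.
case: u => [A d|A d|A d f]; case: v => [A' d'|A' d'|A' d' f'] //=.
- by case/and3P => _ /eqP-> /eqP->.
- by case/and5P => _ /eqP-> /eqP-> _ _.
- case/and5P => _ _ _ H /eqP->; split => //.
  by case/orP: H => /eqP->; apply: restr_sub.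
Qed.

Lemma restr_mono (B A : {set 'I_N}) g k : B \subset A -> restr X B g k \subset restr X A g k.
Proof.
move=> h; apply/fintype.subsetP=> i; rewrite !inE => /andP[hi ->]; by rewrite (fintype.subsetP h).
Qed.

Lemma Vset_mono (B A : {set 'I_N}) : B \subset A -> Vset X B \subset Vset X A.
Proof.
move=> h; apply/fintype.subsetP => g; rewrite !inE => /andP[h0 h1].
rewrite -!finset.subset0 in h0 h1 *.
apply/andP; split.
- by apply: contra h0 => H; exact: subset_trans (restr_mono _ _ _ _ h) H.
- by apply: contra h1 => H; exact: subset_trans (restr_mono _ _ _ _ h) H.
Qed.

Lemma notin_Vset_restr (A : {set 'I_N}) f k : f \notin Vset X (restr X A f k).
Proof.
rewrite inE negb_and !negbK; case: k; apply/orP; [left|right];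
  apply/eqP/setP => i; rewrite !inE; by case: (X i f); rewrite ?andbF.
Qed.

Lemma Vset_card_lt {A : {set 'I_N}} {f} k : f \in Vset X A ->
  (#|Vset X (restr X A f k)| < #|Vset X A|)%N.
Proof.
move=> hf.
have H : Vset X (restr X A f k) \subset Vset X A :\ f.
  apply/fintype.subsetP => g hg; rewrite in_setD1; apply/andP; split.
  - by apply/eqP => Eg; move: hg; rewrite Eg (negbTE (notin_Vset_restr A f k)).
  - exact: (fintype.subsetP (Vset_mono _ _ (restr_sub A f k)) g hg).
rewrite (cardsD1 f (Vset X A)) hf add1n ltnS; exact: subset_leq_card H.
Qed.

Lemma nat_aux {d n n0 n1 F' : nat} : (d + n <= F')%N -> (n0 < n)%N -> (n1 < n)%N ->
  [/\ (d < F')%N, (d.+1 + n0 <= F')%N & (d.+1 + n1 <= F')%N].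
Proof. move=> *; split; lia. Qed.

Lemma ne_nonempty {T} {A : {set 'I_N}} : nonempty_nodes X T A -> A != set0.
Proof. by case: T => [|? ? ?] /= /andP[]. Qed.

Definition inv T (A : {set 'I_N}) d :=
  nonempty_nodes X T A && (d + #|Vset X A| <= F)%N.

Lemma inv_dF {T A d} : inv T A d -> (d < F.+1)%N.
Proof. by case/andP => _ h; lia. Qed.

Lemma inv_ne {T A d} : inv T A d -> A != set0.
Proof. by case/andP => /ne_nonempty. Qed.

Lemma inv_node {f t0 t1 A d} : inv (Node f t0 t1) A d ->
  [/\ A != set0, (d < F)%N, f \in Vset X A,
      inv t0 (restr X A f false) d.+1 & inv t1 (restr X A f true) d.+1].
Proof.
case/andP => /= /and3P[hA h0 h1] hd.
have hf : f \in Vset X A by rewrite inE (ne_nonempty h0) (ne_nonempty h1).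
have c0 : (#|Vset X (restr X A f false)| < #|Vset X A|)%N := Vset_card_lt false hf.
have c1 : (#|Vset X (restr X A f true)| < #|Vset X A|)%N := Vset_card_lt true hf.
have [l1 l2 l3] := nat_aux hd c0 c1.
by split => //; rewrite /inv ?h0 ?h1.
Qed.


Lemma I1 T : forall A d, inv T A d -> forall u, u \in solT X T A d ->
  [/\ idx u \subset A, idx u != set0 & (d <= dep u)%N].
Proof.
elim: T => [|f t0 IH0 t1 IH1] A d hinv u.
- have hd := inv_dF hinv; have hA := inv_ne hinv.
  by rewrite !inE => /orP[]/eqP-> /=; rewrite inordK // subxx hA.
- have [hA hd hf i0 i1] := inv_node hinv.
  rewrite /= !in_setU1 in_setU => /or3P[/eqP->|/eqP->|/orP[h|h]] /=;
    try by rewrite inordK ?subxx ?hA //; lia.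
  + have [h1 h2 h3] := IH0 _ _ i0 u h.
    by split => //; [exact: subset_trans h1 (restr_sub _ _ _)|lia].
  + have [h1 h2 h3] := IH1 _ _ i1 u h.
    by split => //; [exact: subset_trans h1 (restr_sub _ _ _)|lia].
Qed.

Lemma restr_disj (A : {set 'I_N}) f :
  [disjoint restr X A f false & restr X A f true].
Proof.
rewrite -setI_eq0; apply/eqP/setP => i; rewrite !inE.
by case: (X i f); rewrite ?andbF.
Qed.

Lemma closure0 {A d f} {S0 S1 : {set node}} {B0 B1 : {set 'I_N}} :
  (d < F.+1)%N ->
  (forall u, u \in S0 -> [/\ idx u \subset B0, idx u != set0 & (d.+1 <= dep u)%N]) ->
  (forall u, u \in S1 -> [/\ idx u \subset B1, idx u != set0 & (d.+1 <= dep u)%N]) ->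
  [disjoint B0 & B1] ->
  forall u v, u \in S0 ->
    v \in OrN A (inord d) |: (AndN A (inord d) f |: (S0 :|: S1)) ->
    E u v -> v \in S0.
Proof.
move=> hd h0 h1 hB u v hu hv he.
have [e1 e3 e4] := edge_props he; have [u1 u2 u3] := h0 u hu.
move: hv; rewrite !in_setU1 in_setU => /or3P[/eqP Ev|/eqP Ev|/orP[//|hv]].
- by move: e3; rewrite Ev /= inordK // => /(_ isT); lia.
- by move: e4; rewrite Ev /= inordK // => /(_ isT); lia.
- have [v1 v2 v3] := h1 v hv.
  have : idx v \subset B0 :&: B1 by rewrite subsetI (subset_trans e1 u1) v1.
  by rewrite (disjoint_setI0 hB) subset0 (negbTE v2).
Qed.

Lemma closure1 {A d f} {S0 S1 : {set node}} {B0 B1 : {set 'I_N}} :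
  (d < F.+1)%N ->
  (forall u, u \in S0 -> [/\ idx u \subset B0, idx u != set0 & (d.+1 <= dep u)%N]) ->
  (forall u, u \in S1 -> [/\ idx u \subset B1, idx u != set0 & (d.+1 <= dep u)%N]) ->
  [disjoint B0 & B1] ->
  forall u v, u \in S1 ->
    v \in OrN A (inord d) |: (AndN A (inord d) f |: (S0 :|: S1)) ->
    E u v -> v \in S1.
Proof.
move=> hd h0 h1 hB u v hu; rewrite (setUC S0).
apply: (@closure0 A d f S1 S0 B1 B0 hd h1 h0 _ u v hu); by rewrite disjoint_sym.
Qed.

Lemma nlog_mul (x y : R) : 0 <= x -> 0 <= y -> nlog (x * y) = (nlog x + nlog y)%E.
Proof.
move=> hx hy; rewrite /nlog.
have [->|x0] := eqVneq x 0; first by rewrite mul0r eqxx addye //; case: ifP.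
have [->|y0] := eqVneq y 0; first by rewrite mulr0 eqxx addey.
rewrite (negbTE (mulf_neq0 x0 y0)).
rewrite lnM ?posrE ?lt0r ?x0 ?y0 //.
by rewrite opprD EFinD.
Qed.

Lemma nlog_anti (x y : R) : 0 <= x -> 0 <= y -> (nlog x <= nlog y)%E -> y <= x.
Proof.
move=> hx hy; rewrite /nlog.
have [->|y0] := eqVneq y 0; first by [].
have [->|x0] := eqVneq x 0; first by [].
rewrite lee_fin lerN2 ler_ln // posrE lt0r ?x0 ?y0 //.
Qed.

Lemma beta_ge0 (a b : R) : 0 <= Beta a b.
Proof.
rewrite /Beta; apply: fine_ge0; apply: integral_ge0 => x _.
by rewrite lee_fin mulr_ge0 // powR_ge0.
Qed.

Lemma lleaf_ge0 c1 c0 : 0 <= lleaf rho1 rho0 c1 c0.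
Proof. by rewrite /lleaf divr_ge0 // beta_ge0. Qed.

Lemma lik_ge0 T A : 0 <= lik X Y rho1 rho0 T A.
Proof.
elim: T A => [|f t0 IH0 t1 IH1] A /=; first exact: lleaf_ge0.
by rewrite mulr_ge0.
Qed.

Section Alpha.
Hypothesis ha0 : 0 <= alpha.
Hypothesis ha1 : alpha <= 1.
Hypothesis hb : 0 <= beta.

Lemma psplit_ge0 d : 0 <= psplit alpha beta d.
Proof. by rewrite /psplit mulr_ge0 // powR_ge0. Qed.

Lemma psplit_le1 d : psplit alpha beta d <= 1.
Proof.
rewrite /psplit; apply: mulr_ile1; [exact: ha0|exact: powR_ge0|exact: ha1|].
have h1 : 1 <= 1 + d%:R :> R by rewrite lerDl.
have hp : 1 <= (1 + d%:R) `^ beta.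
  by have := ler_powR h1 hb; rewrite powRr0.
rewrite powRN invf_le1 //; exact: lt_le_trans ltr01 hp.
Qed.

Lemma pleaf_ge0 d A : 0 <= pleaf X alpha beta d A.
Proof. by rewrite /pleaf; case: ifP => _ //; rewrite subr_ge0 psplit_le1. Qed.

Lemma pinner_ge0 d A : 0 <= pinner X alpha beta d A.
Proof. by rewrite /pinner; case: ifP => _ //; rewrite divr_ge0 // psplit_ge0. Qed.

Lemma prior_ge0 T A d : 0 <= prior X alpha beta T A d.
Proof.
elim: T A d => [|f t0 IH0 t1 IH1] A d /=; first exact: pleaf_ge0.
by rewrite !mulr_ge0 // pinner_ge0.
Qed.

Lemma succ_leaf {A d} : inv Leaf A d -> forall v,
  (v \in solT X Leaf A d) && E (OrN A (inord d)) v = (v == TermN A (inord d)).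
Proof.
move=> hinv v; have hA := inv_ne hinv.
apply/andP/eqP => [[hv he]|->].
- move: hv; rewrite !inE => /orP[]/eqP Ev //.
  by move: he; rewrite Ev.
- by rewrite !inE eqxx orbT /= hA !eqxx.
Qed.

Lemma succ_node {f t0 t1 A d} : inv (Node f t0 t1) A d -> forall v,
  (v \in solT X (Node f t0 t1) A d) && E (OrN A (inord d)) v
  = (v == AndN A (inord d) f).
Proof.
move=> hinv v; have [hA hd hf i0 i1] := inv_node hinv.
have hd1 : (d < F.+1)%N by rewrite ltnS ltnW.
apply/andP/eqP => [[hv he]|->].
- case: v hv he => [B e|B e|B e g] hv he //=.
  + move: he => /= /and3P[_ /eqP EB /eqP Ee]; subst B e.
    move: hv; rewrite /= !in_setU1 in_setU => /or3P[/eqP E'|/eqP E'|/orP[] h];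
      try discriminate E'.
    * by have [_ _] := I1 _ _ _ i0 _ h; rewrite /= inordK //; lia.
    * by have [_ _] := I1 _ _ _ i1 _ h; rewrite /= inordK //; lia.
  + move: he => /= /and5P[_ /eqP EB /eqP Ee _ _]; subst B e.
    move: hv; rewrite /= !in_setU1 in_setU => /or3P[/eqP E'|/eqP E'|/orP[] h];
      try discriminate E'.
    * by case: E' => ->.
    * by have [_ _] := I1 _ _ _ i0 _ h; rewrite /= inordK //; lia.
    * by have [_ _] := I1 _ _ _ i1 _ h; rewrite /= inordK //; lia.
- split; first by rewrite /= !in_setU1 eqxx orbT.
  by rewrite /= hA !eqxx inordK // hd hf.
Qed.

Definition hs (S : {set node}) u :=
  (\sum_(v in S | E u v) ecost X Y rho1 rho0 alpha beta u v)%E.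

Lemma hs_local (S S' : {set node}) u : S' \subset S ->
  (forall v, v \in S -> E u v -> v \in S') -> hs S u = hs S' u.
Proof.
move=> hS H; apply: eq_bigl => v.
case he: (E u v); rewrite ?andbF ?andbT //.
apply/idP/idP => hv; [exact: H v hv he | exact: (subsetP hS v hv)].
Qed.

Lemma big_setU_disj (S0 S1 : {set node}) (G : node -> \bar R) :
  [disjoint S0 & S1] ->
  (\sum_(u in S0 :|: S1) G u = \sum_(u in S0) G u + \sum_(u in S1) G u)%E.
Proof. by move=> hd; rewrite -bigU //; apply: eq_bigl => u; rewrite !inE. Qed.

Lemma notin_deep {S : {set node}} {B : {set 'I_N}} {d u} :
  (forall u, u \in S -> [/\ idx u \subset B, idx u != set0 & (d.+1 <= dep u)%N]) ->
  dep u = d -> u \notin S.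
Proof. by move=> h hu; apply/negP => /h [_ _]; rewrite hu ltnn. Qed.

Lemma disj_from {S0 S1 : {set node}} {B0 B1 : {set 'I_N}} {d} :
  (forall u, u \in S0 -> [/\ idx u \subset B0, idx u != set0 & (d.+1 <= dep u)%N]) ->
  (forall u, u \in S1 -> [/\ idx u \subset B1, idx u != set0 & (d.+1 <= dep u)%N]) ->
  [disjoint B0 & B1] -> [disjoint S0 & S1].
Proof.
move=> h0 h1 hB; rewrite -setI_eq0 -subset0; apply/subsetP => u.
rewrite inE => /andP[/h0[a1 a2 _] /h1[b1 _ _]].
have : idx u \subset B0 :&: B1 by rewrite subsetI a1 b1.
by rewrite (disjoint_setI0 hB) subset0 (negbTE a2).
Qed.


Lemma cost_main T : forall A d, inv T A d ->
  cost X Y rho1 rho0 alpha beta (solT X T A d)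
  = (nlog (lik X Y rho1 rho0 T A) + nlog (prior X alpha beta T A d))%E.
Proof.
elim: T => [|f t0 IH0 t1 IH1] A d hinv.
- have hd := inv_dF hinv.
  have -> : cost X Y rho1 rho0 alpha beta (solT X Leaf A d)
      = (\sum_(u in solT X Leaf A d) hs (solT X Leaf A d) u)%E by [].
  rewrite /= big_setU1 ?in_set1 //= big_set1.
  rewrite [hs _ (TermN _ _)]big1 // adde0.
  rewrite /hs (big_pred1 (TermN A (inord d))); last exact: succ_leaf hinv.
  by rewrite /= inordK // addeC.
- have [hA hdF hf i0 i1] := inv_node hinv.
  have hd : (d < F.+1)%N by rewrite ltnS ltnW.
  have J0 := I1 _ _ _ i0; have J1 := I1 _ _ _ i1.
  set S0 := solT X t0 _ _ in J0 *; set S1 := solT X t1 _ _ in J1 *.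
  have hS : solT X (Node f t0 t1) A d
     = OrN A (inord d) |: (AndN A (inord d) f |: (S0 :|: S1)) by [].
  have -> : cost X Y rho1 rho0 alpha beta (solT X (Node f t0 t1) A d)
      = (\sum_(u in solT X (Node f t0 t1) A d) hs (solT X (Node f t0 t1) A d) u)%E by [].
  have ho := succ_node hinv.
  rewrite hS in ho *.
  set S := OrN A (inord d) |: _ in ho *.
  have dis := disj_from J0 J1 (restr_disj A f).
  rewrite big_setU1; last first.
    rewrite !in_setU1 in_setU negb_or; apply/andP; split; first by apply/eqP.
    by rewrite negb_or (notin_deep (u := OrN A (inord d)) J0) ?(notin_deep (u := OrN A (inord d)) J1) //= inordK.
  rewrite big_setU1; last first.
    rewrite in_setU negb_or.
    by rewrite (notin_deep (u := AndN A (inord d) f) J0) ?(notin_deep (u := AndN A (inord d) f) J1) //= inordK.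
  rewrite big_setU_disj //.
  have sub0 : S0 \subset S by apply/subsetP => u hu; rewrite /S !in_setU1 in_setU hu !orbT.
  have sub1 : S1 \subset S by apply/subsetP => u hu; rewrite /S !in_setU1 in_setU hu !orbT.
  rewrite (eq_bigr (hs S0)); last first.
    move=> u hu; apply: hs_local => // v hv he.
    exact: (closure0 hd J0 J1 (restr_disj A f) u v hu hv he).
  rewrite (eq_bigr (hs S1) (P := fun u => u \in S1)); last first.
    move=> u hu; apply: hs_local => // v hv he.
    exact: (closure1 hd J0 J1 (restr_disj A f) u v hu hv he).
  have -> : (\sum_(u in S0) hs S0 u = cost X Y rho1 rho0 alpha beta S0)%E by [].
  have -> : (\sum_(u in S1) hs S1 u = cost X Y rho1 rho0 alpha beta S1)%E by [].
  rewrite IH0 // IH1 //.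
  have Ha : hs S (AndN A (inord d) f) = 0%E by apply: big1.
  have Ho : hs S (OrN A (inord d)) = nlog (pinner X alpha beta d A).
    by rewrite /hs (big_pred1 (AndN A (inord d) f)) //= inordK.
  rewrite Ha Ho.
  set L0 := nlog (lik X Y rho1 rho0 t0 _); set L1 := nlog (lik X Y rho1 rho0 t1 _).
  set P0 := nlog (prior X alpha beta t0 _ _); set P1 := nlog (prior X alpha beta t1 _ _).
  transitivity (nlog (pinner X alpha beta d A) + (0 + (L0 + P0 + (L1 + P1))))%E; first by [].
  have g1 := pinner_ge0 d A.
  have g2 := lik_ge0 t0 (restr X A f false); have g3 := lik_ge0 t1 (restr X A f true).
  have g4 := prior_ge0 t0 (restr X A f false) d.+1; have g5 := prior_ge0 t1 (restr X A f true) d.+1.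
  rewrite /= !nlog_mul // ?mulr_ge0 //.
  rewrite add0e addeACA -/L0 -/L1 -/P0 -/P1.
  by rewrite (addeCA _ (L0 + L1)%E); congr (_ + _)%E; rewrite addeA.
Qed.
Lemma root_in T A d : OrN A (inord d) \in solT X T A d.
Proof. by case: T => [|? ? ?]; rewrite /= !inE eqxx. Qed.

Lemma edge_oa (A : {set 'I_N}) d f : A != set0 -> (d < F)%N -> f \in Vset X A ->
  E (OrN A (inord d)) (AndN A (inord d) f).
Proof. by move=> hA hd hf; rewrite /= hA !eqxx inordK ?ltnS ?(ltnW hd) // hd hf. Qed.

Lemma edge_ot (A : {set 'I_N}) d : A != set0 ->
  E (OrN A (inord d)) (TermN A (inord d)).
Proof. by move=> hA; rewrite /= hA !eqxx. Qed.

Lemma edge_ao (A : {set 'I_N}) d f k : A != set0 -> (d < F)%N -> f \in Vset X A ->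
  E (AndN A (inord d) f) (OrN (restr X A f k) (inord d.+1)).
Proof.
move=> hA hd hf; rewrite /= hA hf !inordK ?ltnS ?(ltnW hd) // hd eqxx andbT /=.
by case: k; rewrite eqxx ?orbT.
Qed.

Lemma mem_node f t0 t1 A d w :
  (w \in solT X t0 (restr X A f false) d.+1) || (w \in solT X t1 (restr X A f true) d.+1) ->
  w \in solT X (Node f t0 t1) A d.
Proof.
have -> : solT X (Node f t0 t1) A d = OrN A (inord d) |: (AndN A (inord d) f |:
   (solT X t0 (restr X A f false) d.+1 :|: solT X t1 (restr X A f true) d.+1)) by [].
by move=> h; rewrite !in_setU1 in_setU h !orbT.
Qed.

Lemma and_closed T : forall A d, inv T A d -> forall u v, u \in solT X T A d ->
  is_and u -> E u v -> v \in solT X T A d.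
Proof.
elim: T => [|f t0 IH0 t1 IH1] A d hinv u v.
- by rewrite !inE => /orP[]/eqP->.
- have [hA hdF hf i0 i1] := inv_node hinv.
  have hd : (d < F.+1)%N by rewrite ltnS ltnW.
  have hd1 : (d.+1 < F.+1)%N by rewrite ltnS.
  move=> hu hand he; apply: mem_node; move: hu.
  rewrite [u \in _]/= !in_setU1 in_setU => /or3P[/eqP Eu|/eqP Eu|/orP[h|h]]; try subst u => //.
  + case: v he => [B e|B e|B e g] //= /and5P[_ _ _ hB /eqP he].
    have Ee : e = inord d.+1 by apply: val_inj; rewrite /= he !inordK.
    subst e.
    by case/orP: hB => /eqP->; rewrite root_in ?orbT.
  + by rewrite (IH0 _ _ i0 u v h hand he).
  + by rewrite (IH1 _ _ i1 u v h hand he) orbT.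
Qed.

Lemma or_card T : forall A d, inv T A d -> forall u, u \in solT X T A d ->
  is_or u -> #|[set v in solT X T A d | E u v]| = 1%N.
Proof.
elim: T => [|f t0 IH0 t1 IH1] A d hinv u.
- rewrite !inE => /orP[]/eqP-> // _.
  have -> : [set v in solT X Leaf A d | E (OrN A (inord d)) v] = [set TermN A (inord d)].
    by apply/setP => v; rewrite in_set (succ_leaf hinv) in_set1.
  exact: cards1.
- have [hA hdF hf i0 i1] := inv_node hinv.
  have hd : (d < F.+1)%N by rewrite ltnS ltnW.
  have J0 := I1 _ _ _ i0; have J1 := I1 _ _ _ i1.
  have ho := succ_node hinv.
  move=> hu hor; move: hu.
  rewrite [u \in _]/= !in_setU1 in_setU => /or3P[/eqP Eu|/eqP Eu|/orP[h|h]].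
  + subst u.
    have -> : [set v in solT X (Node f t0 t1) A d | E (OrN A (inord d)) v]
       = [set AndN A (inord d) f].
      by apply/setP => v; rewrite in_set ho in_set1.
    exact: cards1.
  + by subst u.
  + have -> : [set v in solT X (Node f t0 t1) A d | E u v]
       = [set v in solT X t0 (restr X A f false) d.+1 | E u v].
      apply: eq_finset => v; apply/andP/andP => [[hv he]|[hv he]]; split => //.
      * exact: (closure0 hd J0 J1 (restr_disj A f) u v h hv he).
      * by apply: mem_node; rewrite hv.
    exact: IH0.
  + have -> : [set v in solT X (Node f t0 t1) A d | E u v]
       = [set v in solT X t1 (restr X A f true) d.+1 | E u v].
      apply: eq_finset => v; apply/andP/andP => [[hv he]|[hv he]]; split => //.
      * exact: (closure1 hd J0 J1 (restr_disj A f) u v h hv he).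
      * by apply: mem_node; rewrite hv orbT.
    exact: IH1.
Qed.

Lemma connect_mono {S0 S : {set node}} {x y} : S0 \subset S ->
  connect (fun a b => [&& a \in S0, b \in S0 & E a b]) x y ->
  connect (fun a b => [&& a \in S, b \in S & E a b]) x y.
Proof.
move=> hs; apply: connect_sub => a b /and3P[ha hbb he]; apply: connect1.
by rewrite (subsetP hs a ha) (subsetP hs b hbb).
Qed.

Lemma connected T : forall A d, inv T A d -> forall u, u \in solT X T A d ->
  connect (fun a b => [&& a \in solT X T A d, b \in solT X T A d & E a b])
          (OrN A (inord d)) u.
Proof.
elim: T => [|f t0 IH0 t1 IH1] A d hinv u.
- have hA := inv_ne hinv.
  rewrite !inE => /orP[]/eqP->; first exact: connect0.
  by apply: connect1; rewrite /= !inE !eqxx orbT /= hA.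
- have [hA hdF hf i0 i1] := inv_node hinv.
  set S := solT X (Node f t0 t1) A d.
  have hoS : OrN A (inord d) \in S by rewrite /S /= !in_setU1 eqxx.
  have haS : AndN A (inord d) f \in S by rewrite /S /= !in_setU1 eqxx orbT.
  have sub0 : solT X t0 (restr X A f false) d.+1 \subset S.
    by apply/subsetP => w hw; apply: mem_node; rewrite hw.
  have sub1 : solT X t1 (restr X A f true) d.+1 \subset S.
    by apply/subsetP => w hw; apply: mem_node; rewrite hw orbT.
  have c_oa : connect (fun a b => [&& a \in S, b \in S & E a b])
                (OrN A (inord d)) (AndN A (inord d) f).
    by apply: connect1; apply/and3P; split => //; exact: edge_oa.
  move=> hu; move: hu; rewrite [u \in _]/= !in_setU1 in_setU
    => /or3P[/eqP->|/eqP->|/orP[h|h]]; first exact: connect0; first exact: c_oa.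
  + apply: (connect_trans c_oa).
    have c2 := connect_mono sub0 (IH0 _ _ i0 u h).
    apply: (connect_trans _ c2); apply: connect1.
    apply/and3P; split => //; [exact: (subsetP sub0 _ (root_in _ _ _))|exact: edge_ao].
  + apply: (connect_trans c_oa).
    have c2 := connect_mono sub1 (IH1 _ _ i1 u h).
    apply: (connect_trans _ c2); apply: connect1.
    apply/and3P; split => //; [exact: (subsetP sub1 _ (root_in _ _ _))|exact: edge_ao].
Qed.

Lemma inv_root {T} : nonempty_nodes X T [set: 'I_N] -> inv T [set: 'I_N] 0.
Proof.
move=> hne; rewrite /inv hne /= add0n.
by apply: leq_trans (max_card _) _; rewrite card_ord.
Qed.

Lemma hroot : OrN [set: 'I_N] (inord 0) = Defs.root N F.
Proof. by rewrite /Defs.root; congr OrN; apply: val_inj; rewrite /= inordK. Qed.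

Lemma solT_sg {T} : nonempty_nodes X T [set: 'I_N] ->
  solution_graph X (solT X T [set: 'I_N] 0).
Proof.
move=> hne; have hinv := inv_root hne.
split.
- apply/subsetP => u hu; rewrite inE /G_node -hroot.
  move: (connected _ _ _ hinv u hu); apply: connect_sub => a b /and3P[_ _ he].
  exact: connect1.
- by rewrite -hroot root_in.
- by move=> u hu; rewrite -hroot; exact: connected _ _ _ hinv u hu.
- by move=> u hu ha v he; exact: and_closed _ _ _ hinv u v hu ha he.
- by move=> u hu ho; exact: or_card _ _ _ hinv u hu ho.
Qed.

Lemma step {S : {set node}} : solution_graph X S -> forall A d, (d < F.+1)%N ->
  OrN A (inord d) \in S ->
  (TermN A (inord d) \in S /\ A != set0) \/
  exists f, [/\ (d < F)%N, f \in Vset X A, A != set0, AndN A (inord d) f \in S &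
     (OrN (restr X A f false) (inord d.+1) \in S /\
     OrN (restr X A f true) (inord d.+1) \in S)].
Proof.
case=> _ _ _ hand hor A d hd hu.
have /eqP/cards1P[w Hw] := hor _ hu isT.
have : w \in [set v in S | E (OrN A (inord d)) v] by rewrite Hw set11.
rewrite in_set => /andP[hw he].
case: w hw he {Hw} => [B e|B e|B e g] hw he //.
- left; move: he => /= /and3P[hA /eqP EB /eqP Ee]; subst; split => //.
- right; move: he => /= /and5P[hA /eqP EB /eqP Ee hdF hg]; subst.
  rewrite inordK // in hdF.
  by exists g; split => //; split; apply: (hand _ hw isT); exact: edge_ao.
Qed.

Lemma build {S : {set node}} : solution_graph X S -> forall n A d,
  (F - d <= n)%N -> (d < F.+1)%N -> OrN A (inord d) \in S ->
  exists T, nonempty_nodes X T A /\ solT X T A d \subset S.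
Proof.
move=> hS; elim=> [|n IH] A d hn hd hu;
  case: (step hS A d hd hu) => [[ht hA]|[f [hdF hf hA ha [h0 h1]]]].
- exists Leaf; split; first by rewrite /= hA.
  by apply/subsetP => v; rewrite !inE => /orP[]/eqP->.
- exfalso; lia.
- exists Leaf; split; first by rewrite /= hA.
  by apply/subsetP => v; rewrite !inE => /orP[]/eqP->.
- have hd1 : (d.+1 < F.+1)%N by rewrite ltnS.
  have hn1 : (F - d.+1 <= n)%N by lia.
  have [T0 [n0 s0]] := IH _ _ hn1 hd1 h0.
  have [T1 [n1 s1]] := IH _ _ hn1 hd1 h1.
  exists (Node f T0 T1); split; first by rewrite /= hA n0 n1.
  apply/subsetP => v; rewrite [v \in _]/= !in_setU1 in_setU
    => /or3P[/eqP->|/eqP->|/orP[]] //; [move/(subsetP s0)|move/(subsetP s1)] => //.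
Qed.

Lemma sg_is_solT {S : {set node}} : solution_graph X S ->
  exists T, nonempty_nodes X T [set: 'I_N] /\ solT X T [set: 'I_N] 0 = S.
Proof.
move=> hS; have [hG hr hc hand hor] := hS.
have hr' : OrN [set: 'I_N] (inord 0) \in S by rewrite hroot.
have [T [hne sub]] := build hS F [set: 'I_N] 0 (leq_subr 0 F) (ltn0Sn _) hr'.
exists T; split => //.
have hinv := inv_root hne.
have cl : forall u v, u \in solT X T [set: 'I_N] 0 -> v \in S -> E u v ->
    v \in solT X T [set: 'I_N] 0.
  move=> u v hu hv he; case: u hu he => [B e|B e|B e g] hu he //.
  - have /eqP/cards1P[w Hw] := or_card _ _ _ hinv _ hu isT.
    have : w \in [set v in solT X T [set: 'I_N] 0 | E (OrN B e) v] by rewrite Hw set11.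
    rewrite in_set => /andP[hw hew].
    have /eqP/cards1P[x Hx] := hor _ (subsetP sub _ hu) isT.
    have : v \in [set v in S | E (OrN B e) v] by rewrite in_set hv he.
    have : w \in [set v in S | E (OrN B e) v] by rewrite in_set (subsetP sub _ hw) hew.
    by rewrite Hx !in_set1 => /eqP Ew /eqP Ev; rewrite Ev -Ew.
  - exact: (and_closed _ _ _ hinv _ _ hu isT he).
apply/eqP; rewrite eqEsubset sub /=; apply/subsetP => u hu.
have /connectP [p hp ->] := hc u hu.
have hr2 : Defs.root N F \in solT X T [set: 'I_N] 0 by rewrite -hroot root_in.
move: hp hr2; elim: p (Defs.root N F) => [|y p IHp] x //= /andP[/and3P[_ hy he] hp] hx.
exact: IHp hp (cl _ _ hx hy he).
Qed.

Lemma main_sec :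
  (forall T : dtree F, nonempty_nodes X T [set: 'I_N] ->
     cost X Y rho1 rho0 alpha beta (solT X T [set: 'I_N] 0)
     = nlog (joint X Y rho1 rho0 alpha beta T)) /\
  (forall S : {set node},
     solution_graph X S ->
     (forall S', solution_graph X S' ->
        (cost X Y rho1 rho0 alpha beta S <= cost X Y rho1 rho0 alpha beta S')%E) ->
     exists T : dtree F,
       [/\ nonempty_nodes X T [set: 'I_N],
           solT X T [set: 'I_N] 0 = S &
           forall T' : dtree F, nonempty_nodes X T' [set: 'I_N] ->
             joint X Y rho1 rho0 alpha beta T' <= joint X Y rho1 rho0 alpha beta T]).
Proof.
have part1 : forall T : dtree F, nonempty_nodes X T [set: 'I_N] ->
     cost X Y rho1 rho0 alpha beta (solT X T [set: 'I_N] 0)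
     = nlog (joint X Y rho1 rho0 alpha beta T).
  move=> T hne; rewrite (cost_main _ _ _ (inv_root hne)) /joint nlog_mul //.
  - exact: lik_ge0.
  - exact: prior_ge0.
split => // S hS hmin.
have [T [hne hT]] := sg_is_solT hS.
exists T; split => // T' hne'.
have hj : forall T, 0 <= joint X Y rho1 rho0 alpha beta T.
  by move=> T0; rewrite /joint mulr_ge0 // ?lik_ge0 ?prior_ge0.
apply: nlog_anti; [exact: hj|exact: hj|].
rewrite -part1 // -part1 // hT; apply: hmin; exact: solT_sg.
Qed.

End Alpha.

End Proofs.

Theorem theorem6 (R : realType) (N F : nat)
  (X : 'I_N -> 'I_F -> bool) (Y : 'I_N -> bool) (rho1 rho0 alpha beta : R) :
  0 < rho1 -> 0 < rho0 -> 0 < alpha < 1 -> 0 <= beta ->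
  (forall T : dtree F, nonempty_nodes X T [set: 'I_N] ->
     cost X Y rho1 rho0 alpha beta (solT X T [set: 'I_N] 0)
     = nlog (joint X Y rho1 rho0 alpha beta T)) /\
  (forall S : {set node N F},
     solution_graph X S ->
     (forall S', solution_graph X S' ->
        (cost X Y rho1 rho0 alpha beta S <= cost X Y rho1 rho0 alpha beta S')%E) ->
     exists T : dtree F,
       [/\ nonempty_nodes X T [set: 'I_N],
           solT X T [set: 'I_N] 0 = S &
           forall T' : dtree F, nonempty_nodes X T' [set: 'I_N] ->
             joint X Y rho1 rho0 alpha beta T' <= joint X Y rho1 rho0 alpha beta T]).
Proof.
move=> _ _ /andP[ha0 ha1] hb.
exact: (main_sec R N F X Y rho1 rho0 alpha beta (ltW ha0) (ltW ha1) hb).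
Qed.
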